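(* In the setting described in the context, there exists a collection $\Gamma=\{\gamma_{xy}:(x,y)\in\Omega_{worm}\times\Omega_0\}$, where each $\gamma_{xy}$ is a path from $x$ to $y$ through states of $\Omega_{worm}$ in which consecutive states differ in exactly one edge of $E_C$ (i.e. each step is a move of the chain $P$), such that $$\varrho(\Omega_0;\Gamma)\le m^5|E_C|.$$
   Context: Let $\beta>1$. Let $G=(V,E)$ be a finite connected simple 4-regular graph with, at each vertex, its four incident edges labelled bijectively $x_1,\dots,x_4$. Each edge has two half-edges. Pairing at each vertex slot $x_1$ with $x_4$ and $x_2$ with $x_3$, and following edges by entering a vertex through one slot of a pair and leaving through the other, partitions $E$ into closed trails (circuits) $C_1,\dots,C_m$, each with a fixed reference half-edge $h_i$. Consider maps $\sigma$ from half-edges to $\{0,1\}$ with opposite values on the two half-edges of each edge and nonzero weight for the vertex function $f^*$ with $f^*(0011)=f^*(1100)=\beta$, $f^*(0101)=f^*(1010)=1$, $f^*=0$ otherwise (evaluated at $v$ on its half-edges in slot order $x_1,\dots,x_4$); values alternate along circuits and $\sigma(C_i):=\sigma(h_i)$. A vertex where $\{x_1,x_4\}$ lies on $C_i$ and $\{x_2,x_3\}$ on $C_j$, $i\ne j$, is an agree-vertex if its weight is $\beta$ exactly when $\sigma(C_i)=\sigma(C_j)$ (else $1$), and a disagree-vertex if its weight is $\beta$ exactly when $\sigma(C_i)\ne\sigma(C_j)$; $A(i,j),D(i,j)$ count these. $G_C=(\mathcal{C},E_C)$, $\mathcal{C}=\{C_1,\dots,C_m\}$, has edge $\{C_i,C_j\}$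 iff $i\ne j$ and they share such a vertex. Assume the system $X_u\oplus X_v=\mathbf{I}(A(u,v)<D(u,v))$, $\{u,v\}\in E_C$, has a solution over $\mathrm{GF}(2)$; for each $i$ with $X_i=1$ replace $h_i$ by an adjacent half-edge of $C_i$, recompute $A,D$, and set $\beta_e=\beta^{A(u,v)-D(u,v)}$, $x_e=(\beta_e-1)/(\beta_e+1)$ for $e=\{u,v\}\in E_C$. Worm process. $\Omega_k$ is the set of $S\subseteq E_C$ with exactly $k$ odd-degree vertices in $(\mathcal{C},S)$; $\partial S$ is that set of odd-degree vertices; $\Omega_{worm}=\Omega_0\cup\Omega_2$. $w(S)=\prod_{e\in S}x_e$, $Z_k=\sum_{S\in\Omega_k}w(S)$, $\xi(S)=m$ on $\Omega_0$, $2$ on $\Omega_2$, $0$ otherwise, $\pi_{worm}(S)=\xi(S)w(S)/(mZ_0+2Z_2)$. $d(u)$ is the degree of $u$ in $G_C$. The transition matrix $P$ on $\Omega_{worm}$: for $A\in\Omega_{worm}$ and $\{u,v\}\in E_C$, writing $A\oplus uv$ for the symmetric difference of $A$ with $\{\{u,v\}\}$: $P(A,A\oplus uv)=x_{uv}^{\mathbf{I}(uv\notin A)}\frac{1}{2m}\big(\frac{1}{d(u)}+\frac1{d(v)}\big)$ if $A\in\Omega_0$; $=x_{uv}^{\mathbf{I}(uv\notin A)}\frac14\big(\frac1{d(u)}+\frac1{d(v)}\big)$ if $A\oplus uv\in\Omega_0$; $=\min\!\big(1,\frac{d(u)}{d(v)}x_{uv}^{\mathbf{I}(uv\notin A)-\mathbf{I}(uv\in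 A)}\big)\frac1{4d(u)}$ if $A,A\oplus uv\in\Omega_2$ and $u\in\partial A$; all other off-diagonal entries are $0$ and each diagonal entry is $1$ minus the other entries of its row. Congestion. For $\Psi\subseteq\Omega_{worm}$ and a collection $\Gamma$ of paths $\gamma_{xy}$, $(x,y)\in\Omega_{worm}\times\Psi$, with $L(\Gamma)$ the length of the longest path, $$\varrho(\Psi;\Gamma)=\max_{(z,z')\,:\,P(z,z')>0}\frac{L(\Gamma)}{\pi_{worm}(\Psi)\pi_{worm}(z)P(z,z')}\sum_{(x,y)\in\Omega_{worm}\times\Psi,\ \gamma_{xy}\ni(z,z')}\pi_{worm}(x)\pi_{worm}(y).$$ *)

(* Defs.v *)
From HB Require Import structures.
From mathcomp Require Import all_boot all_order all_algebra.
Set Implicit Arguments. Unset Strict Implicit. Unset Printing Implicit Defensive.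
Import Order.TTheory GRing.Theory Num.Theory.
Local Open Scope ring_scope.

(* Half-edges: a half-edge is a (vertex, slot) pair; slot i : 'I_4 stands *)
(* for x_{i+1}.  The edges are given by a fixed-point-free involution     *)
(* [opp] pairing the two half-edges of each edge.                         *)
Definition hedge (V : finType) := (V * 'I_4)%type.

Definition slot1 : 'I_4 := @Ordinal 4 0 isT.
Definition slot2 : 'I_4 := @Ordinal 4 1 isT.
Definition slot3 : 'I_4 := @Ordinal 4 2 isT.
Definition slot4 : 'I_4 := @Ordinal 4 3 isT.

Definition partner (V : finType) (h : hedge V) : hedge V := (h.1, rev_ord h.2).

Definition no_loops (V : finType) (opp : hedge V -> hedge V) :=
  forall h, (opp h).1 != h.1.
Definition simple_graph (V : finType) (opp : hedge V -> hedge V) :=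
  forall h h' : hedge V, h.1 = h'.1 -> (opp h).1 = (opp h').1 -> h = h'.
Definition adjV (V : finType) (opp : hedge V -> hedge V) : rel V :=
  fun a b => [exists i : 'I_4, (opp (a, i)).1 == b].
Definition connected_graph (V : finType) (opp : hedge V -> hedge V) :=
  forall u v : V, connect (adjV opp) u v.

Definition hrel (V : finType) (opp : hedge V -> hedge V) : rel (hedge V) :=
  fun h h' => (h' == opp h) || (h' == partner h).

Definition circ (V : finType) (opp : hedge V -> hedge V) (h : hedge V)
  : {set hedge V} := [set h' | connect (hrel opp) h h'].

Definition Circ (V : finType) (opp : hedge V -> hedge V) : {set {set hedge V}} :=
  [set circ opp h | h : hedge V].

Definition fstar (R : ringType) (beta : R) (a b c d : bool) : R :=
  if ([:: a; b; c; d] == [:: false; false; true; true])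
     || ([:: a; b; c; d] == [:: true; true; false; false]) then beta
  else if ([:: a; b; c; d] == [:: false; true; false; true])
     || ([:: a; b; c; d] == [:: true; false; true; false]) then 1
  else 0.

Definition vweight (R : ringType) (beta : R) (V : finType)
  (sigma : {ffun hedge V -> bool}) (v : V) : R :=
  fstar beta (sigma (v, slot1)) (sigma (v, slot2)) (sigma (v, slot3))
    (sigma (v, slot4)).

Definition valid_sigma (R : ringType) (beta : R) (V : finType)
  (opp : hedge V -> hedge V) (sigma : {ffun hedge V -> bool}) : bool :=
  [forall h, sigma (opp h) == ~~ sigma h] && [forall v, vweight beta sigma v != 0].

Definition crossing (V : finType) (v : V) (C C' : {set hedge V}) : bool :=
  [&& C != C', (v, slot1) \in C, (v, slot4) \in C, (v, slot2) \in C'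
     & (v, slot3) \in C'].

(* sigma(C) := sigma(ref C), ref C being the reference half-edge of C. *)
Definition agree (R : ringType) (beta : R) (V : finType)
  (opp : hedge V -> hedge V) (ref : {set hedge V} -> hedge V)
  (v : V) (C C' : {set hedge V}) : bool :=
  crossing v C C' &&
  [forall sigma : {ffun hedge V -> bool}, valid_sigma beta opp sigma ==>
     ((vweight beta sigma v == beta) == (sigma (ref C) == sigma (ref C')))].

Definition disagree (R : ringType) (beta : R) (V : finType)
  (opp : hedge V -> hedge V) (ref : {set hedge V} -> hedge V)
  (v : V) (C C' : {set hedge V}) : bool :=
  crossing v C C' &&
  [forall sigma : {ffun hedge V -> bool}, valid_sigma beta opp sigma ==>
     ((vweight beta sigma v == beta) == (sigma (ref C) != sigma (ref C')))].

Definition Acnt (R : ringType) (beta : R) (V : finType)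
  (opp : hedge V -> hedge V) (ref : {set hedge V} -> hedge V)
  (e : {set {set hedge V}}) : nat :=
  #|[set v : V | [exists C in e, exists C' in e, agree beta opp ref v C C']]|.

Definition Dcnt (R : ringType) (beta : R) (V : finType)
  (opp : hedge V -> hedge V) (ref : {set hedge V} -> hedge V)
  (e : {set {set hedge V}}) : nat :=
  #|[set v : V | [exists C in e, exists C' in e, disagree beta opp ref v C C']]|.

Definition EC (V : finType) (opp : hedge V -> hedge V) : {set {set {set hedge V}}} :=
  [set e : {set {set hedge V}} |
     [exists C in Circ opp, exists C' in Circ opp,
        [exists v : V, crossing v C C'] && (e == [set C; C'])]].

Definition xweight (R : unitRingType) (beta : R) (V : finType)
  (opp : hedge V -> hedge V) (ref : {set hedge V} -> hedge V)
  (e : {set {set hedge V}}) : R :=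
  let be := beta ^ ((Acnt beta opp ref e)%:Z - (Dcnt beta opp ref e)%:Z) in
  (be - 1) / (be + 1).

(* States are sets S of edges; an edge is a 2-element set of vertices.     *)

Section Worm.
Variables (R : realFieldType) (T : finType) (Vx : {set T}) (E : {set {set T}})
  (x : {set T} -> R).

Definition degE (u : T) : nat := #|[set e in E | u \in e]|.
Definition degS (S : {set {set T}}) (u : T) : nat := #|[set e in S | u \in e]|.
Definition bdry (S : {set {set T}}) : {set T} := [set u in Vx | odd (degS S u)].
Definition Omega (k : nat) : {set {set {set T}}} :=
  [set S : {set {set T}} | (S \subset E) && (#|bdry S| == k)].
Definition Oworm : {set {set {set T}}} := Omega 0 :|: Omega 2.

Definition wt (S : {set {set T}}) : R := \prod_(e in S) x e.
Definition Zk (k : nat) : R := \sum_(S in Omega k) wt S.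
Definition xi (S : {set {set T}}) : R :=
  if S \in Omega 0 then #|Vx|%:R else if S \in Omega 2 then 2 else 0.
Definition piw (S : {set {set T}}) : R :=
  xi S * wt S / (#|Vx|%:R * Zk 0 + 2 * Zk 2).
Definition piset (Psi : {set {set {set T}}}) : R := \sum_(S in Psi) piw S.

Definition toggle (S : {set {set T}}) (e : {set T}) : {set {set T}} :=
  if e \in S then S :\ e else e |: S.
Definition xpow (S : {set {set T}}) (e : {set T}) : R :=
  if e \in S then 1 else x e.
Definition xratio (S : {set {set T}}) (e : {set T}) : R :=
  if e \in S then (x e)^-1 else x e.

Definition Pedge (S : {set {set T}}) (e : {set T}) : R :=
  if S \in Omega 0 then
    xpow S e * (2 * #|Vx|%:R)^-1 * \sum_(u in e) ((degE u)%:R)^-1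
  else if toggle S e \in Omega 0 then
    xpow S e / 4 * \sum_(u in e) ((degE u)%:R)^-1
  else if (S \in Omega 2) && (toggle S e \in Omega 2) then
    \sum_(u in e | u \in bdry S) \sum_(v in e :\ u)
       Num.min 1 ((degE u)%:R / (degE v)%:R * xratio S e) / (4 * (degE u)%:R)
  else 0.

Definition Poff (S S' : {set {set T}}) : R :=
  \sum_(e in E | S' == toggle S e) Pedge S e.

Definition Pm (S S' : {set {set T}}) : R :=
  if S == S' then 1 - \sum_(S'' in Oworm | S'' != S) Poff S S''
  else Poff S S'.

(* Paths: gamma_{xy} is represented by the list p of states after x, so  *)
(* the path is x :: p; each step changes exactly one edge of E, all       *)
(* states lie in Omega_worm, and it ends at y.  Its length is size p.     *)
Definition wstep (a b : {set {set T}}) : bool := [exists e in E, b == toggle a e].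
Definition good_path (s : {set {set T}}) (p : seq {set {set T}})
  (t : {set {set T}}) : bool :=
  [&& path wstep s p, all (fun a => a \in Oworm) p & last s p == t].

Definition paths_ok (Psi : {set {set {set T}}})
  (Gam : {set {set T}} -> {set {set T}} -> seq {set {set T}}) : Prop :=
  forall s t, s \in Oworm -> t \in Psi -> good_path s (Gam s t) t.

Definition Lmax (Psi : {set {set {set T}}})
  (Gam : {set {set T}} -> {set {set T}} -> seq {set {set T}}) : nat :=
  \max_(s in Oworm) \max_(t in Psi) size (Gam s t).

Definition uses (Gam : {set {set T}} -> {set {set T}} -> seq {set {set T}})
  (s t z z' : {set {set T}}) : bool :=
  (z, z') \in zip (s :: Gam s t) (Gam s t).

(* varrho(Psi; Gam) <= b, i.e. for every (z,z') with P(z,z') > 0:         *)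
(*  L * sum_{gamma_st ∋ (z,z')} pi(s) pi(t) <= b * pi(Psi) pi(z) P(z,z')   *)
(* (the ratio form with a possibly zero denominator read as +oo).          *)
Definition congestion_le (Psi : {set {set {set T}}})
  (Gam : {set {set T}} -> {set {set T}} -> seq {set {set T}}) (b : R) : Prop :=
  forall z z', z \in Oworm -> z' \in Oworm -> 0 < Pm z z' ->
    (Lmax Psi Gam)%:R *
      (\sum_(s in Oworm) \sum_(t in Psi | uses Gam s t z z') piw s * piw t)
    <= b * (piset Psi * piw z * Pm z z').

End Worm.

(* Main.v *)
Require Import Defs.
From HB Require Import structures.
From mathcomp Require Import all_boot all_order all_algebra.
From mathcomp Require Import zify ring lra.
Set Implicit Arguments. Unset Strict Implicit. Unset Printing Implicit Defensive.
Import Order.TTheory GRing.Theory Num.Theory.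
Local Open Scope ring_scope.

Section Symd.
Variable T : finType.
Definition symd (A B : {set T}) : {set T} := (A :\: B) :|: (B :\: A).
Lemma in_symd (A B : {set T}) y : (y \in symd A B) = (y \in A) (+) (y \in B).
Proof. by rewrite !inE; case: (y \in A); case: (y \in B). Qed.
Lemma symdC A B : symd A B = symd B A.
Proof. by apply/setP=> y; rewrite !in_symd addbC. Qed.
Lemma symdA A B C : symd A (symd B C) = symd (symd A B) C.
Proof. by apply/setP=> y; rewrite !in_symd addbA. Qed.
Lemma symd0 A : symd A set0 = A.
Proof. by apply/setP=> y; rewrite !in_symd inE addbF. Qed.
Lemma symdK A B : symd (symd A B) B = A.
Proof. by apply/setP=> y; rewrite !in_symd -addbA addbb addbF. Qed.
Lemma symdKl A B : symd A (symd A B) = B.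
Proof. by apply/setP=> y; rewrite !in_symd addbA addbb. Qed.
Lemma symdvv A : symd A A = set0.
Proof. by apply/setP=> y; rewrite !in_symd addbb inE. Qed.
Lemma cards_symd A B : (#|symd A B| + 2 * #|A :&: B| = #|A| + #|B|)%N.
Proof.
have h1 := cardsID A (symd A B).
have e1 : symd A B :&: A = A :\: B by apply/setP=> y; rewrite !inE; case: (y \in A); case: (y \in B).
have e2 : symd A B :\: A = B :\: A by apply/setP=> y; rewrite !inE; case: (y \in A); case: (y \in B).
rewrite e1 e2 in h1.
have h2 := cardsID B A. have h3 := cardsID A B.
rewrite setIC in h3. lia.
Qed.
Lemma symd_sub (A B C : {set T}) : A \subset C -> B \subset C -> symd A B \subset C.
Proof.
move=> /subsetP h1 /subsetP h2; apply/subsetP=> y; rewrite in_symd.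
by case hA: (y \in A); case hB: (y \in B) => //= _; [apply: h1|apply: h2].
Qed.
End Symd.

Section Worm1.
Variables (T : finType) (Vx : {set T}) (E : {set {set T}}).

Lemma toggleE (S : {set {set T}}) e : toggle S e = symd S [set e].
Proof.
rewrite /toggle; apply/setP=> y; rewrite in_symd.
case: (boolP (e \in S)) => h; rewrite !inE; case: eqP => [->|_] //=; rewrite ?h ?andbT ?andbF ?orbF ?addbT ?addbF //.
Qed.

Lemma odd_degS_symd (S S' : {set {set T}}) u :
  odd (degS (symd S S') u) = odd (degS S u) (+) odd (degS S' u).
Proof.
rewrite /degS.
have -> : [set e in symd S S' | u \in e] = symd [set e in S | u \in e] [set e in S' | u \in e].
  by apply/setP=> e; rewrite inE !in_symd !inE; case: (u \in e); rewrite ?andbT ?andbF.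
have h := cards_symd [set e in S | u \in e] [set e in S' | u \in e].
have := congr1 odd h; rewrite !oddD => <-; by case: (odd #|symd _ _|); case: (odd #|_ :&: _|).
Qed.

Lemma bdry_symd (S S' : {set {set T}}) : bdry Vx (symd S S') = symd (bdry Vx S) (bdry Vx S').
Proof.
apply/setP=> u; rewrite in_symd !inE odd_degS_symd.
by case: (u \in Vx).
Qed.

Lemma degS1 (e : {set T}) u : degS [set e] u = (u \in e).
Proof.
rewrite /degS; case h: (u \in e).
  have -> : [set e0 in [set e] | u \in e0] = [set e] by apply/setP=> y; rewrite !inE; case: eqP => // ->; rewrite h.
  by rewrite cards1.
have -> : [set e0 in [set e] | u \in e0] = set0 by apply/setP=> y; rewrite !inE; case: eqP => // ->; rewrite h.
by rewrite cards0.
Qed.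

Lemma bdry1 (e : {set T}) : e \subset Vx -> bdry Vx [set e] = e.
Proof.
move=> /subsetP h; apply/setP=> u; rewrite !inE degS1.
by case hu: (u \in e) => //=; rewrite ?andbT ?andbF // h.
Qed.

Lemma bdry_sub (S : {set {set T}}) : bdry Vx S \subset Vx.
Proof. by apply/subsetP=> u; rewrite inE => /andP[]. Qed.

Lemma bdry0 : bdry Vx set0 = set0.
Proof.
apply/setP=> u; rewrite !inE /degS.
rewrite (_ : [set e in (set0 : {set {set T}}) | u \in e] = set0) ?cards0 ?andbF //.
by apply/setP=> y; rewrite !inE.
Qed.

Lemma in_Omega (S : {set {set T}}) k : (S \in Omega Vx E k) = (S \subset E) && (#|bdry Vx S| == k).
Proof. by rewrite inE. Qed.

Lemma in_Oworm (S : {set {set T}}) : (S \in Oworm Vx E) = (S \subset E) && ((#|bdry Vx S| == 0%N) || (#|bdry Vx S| == 2)).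
Proof. rewrite /Oworm inE !in_Omega; by case: (S \subset E). Qed.

Lemma Omega0E (S : {set {set T}}) : (S \in Omega Vx E 0) = (S \subset E) && (bdry Vx S == set0).
Proof. by rewrite in_Omega cards_eq0. Qed.

End Worm1.

Section Griffiths.
Variables (R : realFieldType) (T : finType) (Vx : {set T}) (E : {set {set T}})
  (x : {set T} -> R).
Hypothesis EVx : forall e, e \in E -> e \subset Vx.
Hypothesis x_ge0 : forall e, e \in E -> 0 <= x e.
Hypothesis x_le1 : forall e, e \in E -> x e <= 1.

Definition ZW (W : {set T}) : R :=
  \sum_(S : {set {set T}} | (S \subset E) && (bdry Vx S == W)) wt x S.

Definition sg (b : bool) : R := if b then -1 else 1.
Definition chi (s : {ffun T -> bool}) (A : {set T}) : R := \prod_(u in A) sg (s u).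
Definition ax (e : {set T}) : R := if e \in E then x e else 0.
Definition Fs (s : {ffun T -> bool}) : R := \prod_(e : {set T}) (1 + ax e * chi s e).
Definition oddset (J : {set {set T}}) : {set T} := [set u | odd (degS J u)].

Lemma sgX b n : sg b ^+ n = sg b ^+ odd n.
Proof. by case: b; rewrite /sg ?expr1n // signr_odd. Qed.

Lemma sum_sg n : \sum_(b : bool) sg b ^+ n = if odd n then 0 else 2.
Proof.
rewrite (bigD1 true) //= (bigD1 false) //= big1 ?addr0; last by case.
rewrite -signr_odd expr1n; case: (odd n); rewrite ?expr1 ?expr0; lra.
Qed.

Lemma chi_prod s W (J : {set {set T}}) :
  chi s W * \prod_(e in J) chi s e =
  \prod_(u : T) sg (s u) ^+ ((u \in W) + degS J u)%N.
Proof.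
rewrite /chi (exchange_big_dep predT) //=.
rewrite big_mkcond /= -big_split /=; apply: eq_bigr => u _.
rewrite exprD; congr (_ * _); first by case: (u \in W); rewrite ?expr1 ?expr0.
rewrite prodr_const /degS; congr (_ ^+ _).
by apply: eq_card => e; rewrite !inE.
Qed.

Lemma sum_chi_prod W (J : {set {set T}}) :
  \sum_(s : {ffun T -> bool}) chi s W * \prod_(e in J) chi s e =
  if oddset J == W then 2 ^+ #|T| else 0.
Proof.
under eq_bigr do rewrite chi_prod.
rewrite -(bigA_distr_bigA (fun u b => sg b ^+ ((u \in W) + degS J u)%N)) /=.
under eq_bigr do rewrite sum_sg.
case: eqP => [<-|hne].
  rewrite -prodr_const; apply: eq_bigr => u _.
  by rewrite oddD inE; case: (odd (degS J u)).
have : [exists u, odd ((u \in W) + degS J u)%N].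
  apply: contraT; rewrite negb_exists => /forallP h.
  exfalso; apply: hne; apply/setP=> u; have := h u; rewrite inE oddD.
  by case: (u \in W); case: (odd (degS J u)).
case/existsP=> u hu.
by rewrite (bigD1 u) //= hu mul0r.
Qed.

Lemma Fs_expand s :
  Fs s = \sum_(J : {set {set T}}) (\prod_(e in J) ax e) * \prod_(e in J) chi s e.
Proof.
rewrite /Fs.
under eq_bigr do rewrite addrC.
rewrite bigA_distr /=; apply: eq_bigr => J _.
by rewrite -big_split /= [RHS]big_mkcond /=; apply: eq_bigr => e _; case: (e \in J).
Qed.

Lemma prod_ax (J : {set {set T}}) :
  \prod_(e in J) ax e = if J \subset E then wt x J else 0.
Proof.
case: (boolP (J \subset E)) => h.
  by apply: eq_bigr => e he; rewrite /ax (subsetP h e he).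
have [e he] : exists e, (e \in J) && (e \notin E).
  by apply/existsP; apply: contraR h => /existsPn hn; apply/subsetP=> e he; have := hn e; rewrite he /= negbK.
case/andP: he => h1 h2.
by rewrite (bigD1 e) //= /ax (negbTE h2) mul0r.
Qed.

Lemma oddset_bdry (J : {set {set T}}) : J \subset E -> oddset J = bdry Vx J.
Proof.
move=> hJ; apply/setP=> u; rewrite !inE.
case hu: (u \in Vx) => //=.
rewrite /degS (_ : [set e in J | u \in e] = set0) ?cards0 //.
apply/setP=> e; rewrite !inE; apply/negP => /andP[he hue].
have := subsetP (EVx (subsetP hJ e he)) u hue; by rewrite hu.
Qed.

Lemma sum_chi_F W : \sum_(s : {ffun T -> bool}) chi s W * Fs s = 2 ^+ #|T| * ZW W.
Proof.
under eq_bigr do rewrite Fs_expand mulr_sumr.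
rewrite exchange_big /=.
under eq_bigr => J _ do [under eq_bigr do rewrite mulrCA; rewrite -mulr_sumr sum_chi_prod prod_ax].
rewrite /ZW mulr_sumr [RHS]big_mkcond /=; apply: eq_bigr => J _.
case: (boolP (J \subset E)) => hJ /=; last by rewrite mul0r.
rewrite oddset_bdry //; case: eqP => _; rewrite ?mulr0 //; by rewrite mulrC.
Qed.

Lemma sg_norm b : `|sg b| = 1.
Proof. by case: b; rewrite /sg ?normrN normr1. Qed.

Lemma chi_norm s A : `|chi s A| = 1.
Proof. by rewrite /chi normr_prod; apply: big1 => u _; apply: sg_norm. Qed.

Lemma Fs_ge0 s : 0 <= Fs s.
Proof.
apply: prodr_ge0 => e _.
have h : `|ax e * chi s e| <= 1.
  rewrite normrM chi_norm mulr1 /ax; case: (boolP (e \in E)) => he; last by rewrite normr0.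
  by rewrite ger0_norm ?x_ge0 ?x_le1.
move: h; rewrite ler_norml => /andP[h1 _]; lra.
Qed.

Lemma chi0 s : chi s set0 = 1.
Proof. by rewrite /chi big_set0. Qed.

Lemma ZW_le W : ZW W <= ZW set0.
Proof.
have hp : (0 : R) < 2 ^+ #|T| by apply: exprn_gt0; lra.
rewrite -(ler_pM2l hp) -!sum_chi_F.
apply: ler_sum => s _; rewrite chi0 mul1r.
apply: le_trans (ler_norm _) _.
by rewrite normrM chi_norm mul1r ger0_norm ?Fs_ge0.
Qed.

End Griffiths.

Local Close Scope ring_scope.

Lemma mkseq_cons (A : Type) (f : nat -> A) n :
  mkseq f n.+1 = f 0%N :: mkseq (fun k => f k.+1) n.
Proof.
elim: n => [//|n IH]; by rewrite mkseqS IH /= -mkseqS.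
Qed.

Lemma zip_rcons_l (A B : Type) (a : seq A) (b : seq B) y :
  size a = size b -> zip (rcons a y) b = zip a b.
Proof.
elim: a b => [|u a IH] [|v b] //= [h]; by rewrite IH.
Qed.

Section Paths.
Variables (T : finType) (Vx : {set T}) (E : {set {set T}}).
Hypothesis Eedge : forall e, e \in E ->
  exists a b, [/\ a \in Vx, b \in Vx, a != b & e = [set a; b]].

Lemma EVx e : e \in E -> e \subset Vx.
Proof.
case/Eedge=> a [b [ha hb _ ->]]; apply/subsetP=> u; rewrite !inE.
by case/orP=> /eqP ->.
Qed.

Lemma Ecard e : e \in E -> #|e| = 2%N.
Proof. by case/Eedge=> a [b [ha hb hab ->]]; rewrite cards2 hab. Qed.

Implicit Types (U Rm s t z : {set {set T}}).
Definition gsel (Rm : {set {set T}}) : {set T} :=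
  odflt (odflt set0 [pick e in Rm]) [pick e in Rm | ~~ [disjoint e & bdry Vx Rm]].
Definition stepR (Rm : {set {set T}}) := Rm :\ gsel Rm.
Definition Rk (U : {set {set T}}) k := iter k stepR U.

Lemma gsel_in (Rm : {set {set T}}) : Rm != set0 -> gsel Rm \in Rm.
Proof.
move=> hne; rewrite /gsel.
case: pickP => [e he|hn]; case: pickP => [e2 h2|hn2] /=; try by case/andP: h2.
  done.
case/set0Pn: hne => e he; by have := hn e; rewrite he.
Qed.

Lemma gsel_meet (Rm : {set {set T}}) : Rm \subset E -> bdry Vx Rm != set0 ->
  ~~ [disjoint gsel Rm & bdry Vx Rm].
Proof.
move=> hRm /set0Pn [u hu]; rewrite /gsel.
case: (pickP [pred e | (e \in Rm) && ~~ [disjoint e & bdry Vx Rm]]) => [e /andP[_ h]|hn] //=.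
exfalso.
move: (hu); rewrite inE => /andP[_ hodd].
have : (0 < degS Rm u)%N by case: (degS Rm u) hodd.
rewrite /degS card_gt0 => /set0Pn [e]; rewrite inE => /andP[he hue].
have := hn e; rewrite /= he /= => /negbFE /pred0P h.
by move: (h u); rewrite /= hue hu.
Qed.

Lemma RkS U k : Rk U k.+1 = stepR (Rk U k).
Proof. by rewrite /Rk iterS. Qed.

Lemma Rk_step_sub U k : Rk U k.+1 \subset Rk U k.
Proof. by rewrite RkS /stepR subD1set. Qed.

Lemma Rk_mono U i j : (i <= j)%N -> Rk U j \subset Rk U i.
Proof.
move=> hij; rewrite -(subnKC hij); elim: (j - i)%N => [|d IH]; first by rewrite addn0.
by rewrite addnS; apply: subset_trans IH; apply: Rk_step_sub.
Qed.

Lemma Rk_sub U k : Rk U k \subset U.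
Proof. exact: (Rk_mono U (leq0n k)). Qed.

Lemma card_Rk U k : (k <= #|U|)%N -> #|Rk U k| = (#|U| - k)%N.
Proof.
elim: k => [|k IH] hk; first by rewrite subn0.
have IH' := IH (ltnW hk).
have hne : Rk U k != set0 by rewrite -card_gt0 IH'; lia.
rewrite RkS /stepR; have := cardsD1 (gsel (Rk U k)) (Rk U k).
rewrite gsel_in // IH' add1n => h; by rewrite subnS h.
Qed.

Lemma Rk_end U : Rk U #|U| = set0.
Proof. by apply/eqP; rewrite -cards_eq0 card_Rk // subnn. Qed.

Lemma Rk_ne U k : (k < #|U|)%N -> Rk U k != set0.
Proof. by move=> hk; rewrite -card_gt0 card_Rk ?(ltnW hk) //; lia. Qed.

Lemma gsel_Rk_in U k : (k < #|U|)%N -> gsel (Rk U k) \in Rk U k.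
Proof. by move=> hk; apply: gsel_in; apply: Rk_ne. Qed.

Lemma gsel_Rk_notin U k : gsel (Rk U k) \notin Rk U k.+1.
Proof. by rewrite RkS /stepR !inE eqxx. Qed.

Lemma gsel_inj U i j : (i < #|U|)%N -> (j < #|U|)%N ->
  gsel (Rk U i) = gsel (Rk U j) -> i = j.
Proof.
wlog hij : i j / (i <= j)%N.
  move=> H hi hj he; case: (leqP i j) => h; first exact: H.
  by symmetry; apply: H => //; apply: ltnW.
move=> hi hj he; case: (ltngtP i j) => [hlt|hgt|//]; last by move: hij; rewrite leqNgt hgt.
have h1 := gsel_Rk_in hj.
have h2 : Rk U j \subset Rk U i.+1 by apply: Rk_mono.
have := subsetP h2 _ h1; rewrite -he.
by rewrite (negbTE (gsel_Rk_notin U i)).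
Qed.

Lemma stepR_symd (Rm : {set {set T}}) : Rm != set0 -> stepR Rm = symd Rm [set gsel Rm].
Proof.
move=> hne; have hg := gsel_in hne.
apply/setP=> e; rewrite /stepR in_symd !inE.
case: eqP => [->|_]; by rewrite ?hg ?addbT ?addbF ?andbT.
Qed.

Lemma bdry_Rk U k : U \subset E ->
  ((#|bdry Vx U| == 0%N) || (#|bdry Vx U| == 2)) ->
  (#|bdry Vx (Rk U k)| == 0%N) || (#|bdry Vx (Rk U k)| == 2).
Proof.
move=> hU; elim: k => [//|k IH] /(IH) {}IH.
rewrite RkS.
have hsub : Rk U k \subset E := subset_trans (Rk_sub U k) hU.
case: (boolP (Rk U k == set0)) => [/eqP ->|hne].
  by rewrite /stepR set0D bdry0 cards0.
have hg := gsel_in hne.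
have hgE : gsel (Rk U k) \in E := subsetP hsub _ hg.
rewrite stepR_symd // bdry_symd bdry1 ?EVx //.
move: IH; set b := bdry Vx (Rk U k); set g := gsel (Rk U k) => IH.
have hc := cards_symd b g.
have hg2 : #|g| = 2%N by apply: Ecard.
have hbg : (#|b :&: g| <= #|g|)%N by apply: subset_leq_card; apply: subsetIr.
case/orP: IH => /eqP hb.
  have : b = set0 by apply/eqP; rewrite -cards_eq0 hb.
  move=> hb0; rewrite hb0 set0I cards0 in hc; rewrite hg2 in hc.
  apply/orP; right; apply/eqP; rewrite hb0; lia.
have hmeet : ~~ [disjoint g & b].
  by rewrite /g /b; apply: gsel_meet => //; rewrite -card_gt0 -/b hb.
have : (0 < #|b :&: g|)%N.
  rewrite card_gt0; move: hmeet; rewrite disjoint_sym -setI_eq0; by [].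
move=> hpos; rewrite hb hg2 in hc.
apply/orP; lia.
Qed.

Definition fz (s t : {set {set T}}) k := symd t (Rk (symd s t) k).
Definition Gam (s t : {set {set T}}) : seq {set {set T}} :=
  mkseq (fun k => fz s t k.+1) #|symd s t|.

Lemma fz0 s t : fz s t 0 = s.
Proof. by rewrite /fz /Rk /= symdC symdK. Qed.

Lemma fz_end s t : fz s t #|symd s t| = t.
Proof. by rewrite /fz Rk_end symd0. Qed.

Lemma s_Gam s t : s :: Gam s t = mkseq (fz s t) #|symd s t|.+1.
Proof. by rewrite mkseq_cons fz0. Qed.

Lemma fzS s t k : (k < #|symd s t|)%N ->
  fz s t k.+1 = toggle (fz s t k) (gsel (Rk (symd s t) k)).
Proof.
move=> hk; rewrite toggleE /fz RkS stepR_symd ?Rk_ne //.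
by rewrite symdA.
Qed.

Lemma uses_fz s t z z' :
  (z, z') \in zip (s :: Gam s t) (Gam s t) ->
  exists2 k, (k < #|symd s t|)%N & z = fz s t k /\ z' = fz s t k.+1.
Proof.
rewrite s_Gam mkseqS zip_rcons_l ?size_mkseq //.
case/(nthP (z, z')) => i; rewrite size_zip !size_mkseq minnn => hi.
rewrite nth_zip ?size_mkseq // !nth_mkseq // => [[<- <-]].
by exists i.
Qed.

End Paths.

Local Open Scope ring_scope.

Lemma term_lb (R : realFieldType) (du dv D r q : R) :
  1 <= du -> du <= D -> 1 <= dv -> dv <= D -> 0 <= q -> q <= 1 -> q <= r ->
  q / (4 * D) <= Num.min 1 (du / dv * r) / (4 * du).
Proof.
move=> h1 h2 h3 h4 h5 h6 h7.
have hD : 0 < D by lra.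
have hdu : 0 < du by lra.
have hdv : 0 < dv by lra.
have hinv : D^-1 <= dv^-1 by rewrite lef_pV2 ?posrE.
have hiD : 0 <= D^-1 by rewrite invr_ge0; lra.
have key : q * du / D <= Num.min 1 (du / dv * r).
  rewrite le_min; apply/andP; split.
    rewrite ler_pdivrMr // mul1r; nra.
  have h8 : D^-1 * q <= dv^-1 * r by apply: ler_pM.
  have -> : q * du / D = (D^-1 * q) * du by ring.
  have -> : du / dv * r = (dv^-1 * r) * du by ring.
  apply: ler_wpM2r => //; lra.
rewrite ler_pdivlMr; last lra.
apply: le_trans key; rewrite le_eqVlt; apply/orP; left; apply/eqP.
by field; rewrite gt_eqF.
Qed.

Lemma lemid (R : realFieldType) (b a c : R) : a <= b -> b <= c -> a <= c.
Proof. exact: le_trans. Qed.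
Arguments lemid [R] b%_ring_scope [a c].

Lemma nat_bound L M N : (L <= N)%N -> (2 <= M)%N ->
  (L * M * (1 + M * M) * (2 * M.-1) <= M ^ 5 * N)%N.
Proof.
move=> hL hM.
have h1 : (M * (1 + M * M) * (2 * M.-1) <= M ^ 5)%N.
  case: M hM => [|[|k]] // _.
  rewrite !expnS expn0 /=. nia.
have h2 : (L * (M * (1 + M * M) * (2 * M.-1)) <= N * M ^ 5)%N by apply: leq_mul.
rewrite !mulnA in h2; rewrite mulnC; nia.
Qed.

Section Main.
Variables (R : realFieldType) (T : finType) (Vx : {set T}) (E : {set {set T}})
  (x : {set T} -> R).
Hypothesis Eedge : forall e, e \in E ->
  exists a b, [/\ a \in Vx, b \in Vx, a != b & e = [set a; b]].
Hypothesis x_ge0 : forall e, e \in E -> 0 <= x e.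
Hypothesis x_le1 : forall e, e \in E -> x e <= 1.
Implicit Types (s t z S : {set {set T}}).

Local Notation m := #|Vx|.
Local Notation Zd := (#|Vx|%:R * Zk Vx E x 0 + 2 * Zk Vx E x 2).

Lemma wt_ge0 S : S \subset E -> 0 <= wt x S.
Proof. by move=> /subsetP h; apply: prodr_ge0 => e he; apply: x_ge0; apply: h. Qed.

Lemma Omega_sub S k : S \in Omega Vx E k -> S \subset E.
Proof. by rewrite in_Omega => /andP[]. Qed.

Lemma Zk_ge0 k : 0 <= Zk Vx E x k.
Proof. by apply: sumr_ge0 => S /Omega_sub /wt_ge0. Qed.

Lemma set0_Omega0 : (set0 : {set {set T}}) \in Omega Vx E 0.
Proof. by rewrite Omega0E sub0set bdry0 eqxx. Qed.

Lemma Zk0_ge1 : 1 <= Zk Vx E x 0.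
Proof.
rewrite /Zk (bigD1 set0) ?set0_Omega0 //= /wt big_set0.
rewrite lerDl; apply: sumr_ge0 => S /andP[/Omega_sub /wt_ge0 h _] //.
Qed.

Lemma m_gt0_of S : S \in Omega Vx E 2 -> (2 <= m)%N.
Proof.
rewrite in_Omega => /andP[_ /eqP h]; rewrite -h; apply: subset_leq_card; apply: bdry_sub.
Qed.

Lemma Zd_gt0 : (0 < m)%N -> 0 < Zd.
Proof.
move=> hm; have h1 := Zk0_ge1; have h2 := Zk_ge0 2.
have h3 : (1 : R) <= m%:R by rewrite ler1n.
nra.
Qed.

Lemma xi_ge0 S : 0 <= xi R Vx E S.
Proof. rewrite /xi; case: ifP => _; first by rewrite ler0n. case: ifP => _; lra. Qed.

Lemma xi_le S : S \in Oworm Vx E -> xi R Vx E S <= m%:R.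
Proof.
rewrite /xi /Oworm inE; case: ifP => [_ _|h0 /= h2]; first by [].
rewrite h2; have := m_gt0_of h2; rewrite -(ler_nat R) => h; exact: h.
Qed.

Lemma piw_ge0 S : 0 <= piw Vx E x S.
Proof.
rewrite /piw; case: (boolP (S \in Oworm Vx E)) => hS.
  apply: divr_ge0; last by apply: addr_ge0; [apply: mulr_ge0; [rewrite ler0n|apply: Zk_ge0]| apply: mulr_ge0; [lra|apply: Zk_ge0]].
  apply: mulr_ge0; first by apply: xi_ge0.
  by apply: wt_ge0; move: hS; rewrite /Oworm inE => /orP[] /Omega_sub.
move: hS; rewrite /Oworm inE negb_or => /andP[/negbTE h0 /negbTE h2].
by rewrite /xi h0 h2 !mul0r.
Qed.

Lemma degE_pos u e : e \in E -> u \in e -> (1 <= degE E u)%N.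
Proof.
move=> he hu; rewrite /degE card_gt0; apply/set0Pn; exists e; by rewrite inE he hu.
Qed.

Lemma degE_le u : u \in Vx -> (degE E u <= m.-1)%N.
Proof.
move=> hu.
have hsub : [set e in E | u \in e] \subset [set [set u; v] | v in Vx :\ u].
  apply/subsetP=> e; rewrite inE => /andP[he hue].
  case/Eedge: (he) => a [b [ha hb hab hE]].
  move: hue; rewrite hE !inE => /orP[] /eqP hu'.
    apply/imsetP; exists b; first by rewrite !inE hb andbT hu' eq_sym.
    by rewrite hu'.
  apply/imsetP; exists a; first by rewrite !inE ha andbT hu'.
  by rewrite hu' setUC.
rewrite /degE; apply: leq_trans (subset_leq_card hsub) _.
apply: leq_trans (leq_imset_card _ _) _.
by rewrite (cardsD1 u Vx) hu.
Qed.


Local Notation D := ((m.-1)%:R : R).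

Lemma inv_deg_lb u e : e \in E -> u \in e -> D^-1 <= ((degE E u)%:R)^-1.
Proof.
move=> he hu.
have hV : u \in Vx by apply: (subsetP (EVx Eedge he)).
have h1 := degE_pos he hu; have h2 := degE_le hV.
rewrite lef_pV2 ?posrE ?ler_nat ?ltr0n //; lia.
Qed.

Lemma deg_ge1 u e : e \in E -> u \in e -> (1 : R) <= (degE E u)%:R.
Proof. by move=> he hu; rewrite ler1n; apply: degE_pos he hu. Qed.

Lemma deg_leD u e : e \in E -> u \in e -> ((degE E u)%:R : R) <= D.
Proof.
move=> he hu; have hV : u \in Vx by apply: (subsetP (EVx Eedge he)).
by rewrite ler_nat; apply: degE_le.
Qed.

Lemma sum_inv_lb e : e \in E -> D^-1 <= \sum_(u in e) ((degE E u)%:R)^-1.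
Proof.
move=> he; case/Eedge: (he) => a [b [ha hb hab hE]].
have hae : a \in e by rewrite hE !inE eqxx.
rewrite (bigD1 a) //=; apply: le_trans (inv_deg_lb he hae) _.
rewrite lerDl; apply: sumr_ge0 => u _; by rewrite invr_ge0 ler0n.
Qed.

Lemma xpow_ge0 z e : e \in E -> 0 <= xpow x z e.
Proof. rewrite /xpow; case: ifP => _ he; [lra|exact: x_ge0]. Qed.
Lemma xpow_le1 z e : e \in E -> xpow x z e <= 1.
Proof. rewrite /xpow; case: ifP => _ he; [lra|exact: x_le1]. Qed.

Lemma Pedge_lb z e :
  z \in Oworm Vx E -> toggle z e \in Oworm Vx E -> e \in E ->
  (z \in Omega Vx E 2 -> ~~ [disjoint e & bdry Vx z]) ->
  (e \in z -> 0 < x e) -> (2 <= m)%N ->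
  xpow x z e / (2 * D) <= xi R Vx E z * Pedge Vx E x z e.
Proof.
move=> hz hz' he hmeet hpos hm.
have hD : 1 <= D by rewrite ler1n; lia.
have hq0 := xpow_ge0 z he; have hq1 := xpow_le1 z he.
have hS := sum_inv_lb he.
have hiD : 0 < D^-1 by rewrite invr_gt0; lra.
set q := xpow x z e; set S := \sum_(u in e) _ in hS.
rewrite /Pedge /xi -/q -/S.
case: ifP => h0.
  have hmr : (0 : R) < m%:R by rewrite ltr0n; apply: leq_trans hm.
  have -> : m%:R * (q * (2 * m%:R)^-1 * S) = (q * S) / 2.
    by field; rewrite gt_eqF.
  have -> : q / (2 * D) = (q * D^-1) / 2 by field; rewrite gt_eqF //; lra.
  rewrite ler_pM2r; last lra.
  by apply: ler_wpM2l.
have h2 : z \in Omega Vx E 2 by move: hz; rewrite /Oworm inE h0.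
rewrite h2.
case: ifP => h0'.
  have -> : 2 * (q / 4 * S) = (q * S) / 2 by field.
  have -> : q / (2 * D) = (q * D^-1) / 2 by field; rewrite gt_eqF //; lra.
  rewrite ler_pM2r; last lra.
  by apply: ler_wpM2l.
have h2' : toggle z e \in Omega Vx E 2 by move: hz'; rewrite /Oworm inE h0'.
rewrite h2' /=.
have [u hu] : exists u, (u \in e) && (u \in bdry Vx z).
  have := hmeet h2; rewrite -setI_eq0 => /set0Pn [u]; rewrite inE => hu; by exists u.
case/andP: hu => hue hub.
case/Eedge: (he) => a [b [ha hb hab hE]].
have [v hv] : exists v, v \in e :\ u.
  move: hue; rewrite hE !inE => /orP[] /eqP ->; [exists b | exists a]; rewrite !inE eqxx ?orbT //.
    by rewrite eq_sym hab.
  by rewrite hab.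
have hve : v \in e by move: hv; rewrite inE => /andP[].
set F := fun u v => Num.min 1 ((degE E u)%:R / (degE E v)%:R * xratio x z e) / (4 * (degE E u)%:R).
have hF0 : forall u v, 0 <= F u v.
  move=> u' v'; rewrite /F; apply: divr_ge0; last by apply: mulr_ge0; [lra|rewrite ler0n].
  rewrite le_min ler01 /=; apply: mulr_ge0; first by apply: divr_ge0; rewrite ler0n.
  rewrite /xratio; case: ifP => _; [rewrite invr_ge0|]; exact: x_ge0.
have hqr : q <= xratio x z e.
  rewrite /q /xpow /xratio; case: ifP => hez; last lra.
  by rewrite invf_ge1 ?hpos ?x_le1.
have hterm : q / (4 * D) <= F u v.
  by apply: term_lb => //; [apply: deg_ge1 hue|apply: deg_leD hue|apply: deg_ge1 hve|apply: deg_leD hve].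
have hsum : F u v <= \sum_(u0 in e | u0 \in bdry Vx z) \sum_(v0 in e :\ u0) F u0 v0.
  rewrite (bigD1 u) /=; last by rewrite hue hub.
  rewrite (bigD1 v) //= -addrA lerDl.
  apply: addr_ge0; apply: sumr_ge0 => w _; try apply: sumr_ge0 => w' _; apply: hF0.
rewrite /F in hsum; apply: le_trans (ler_wpM2l _ hsum); last lra.
apply: le_trans (ler_wpM2l _ hterm); last lra.
rewrite le_eqVlt; apply/orP; left; apply/eqP; by field; rewrite gt_eqF //; lra.
Qed.

Lemma U_sub s t : s \subset E -> t \subset E -> symd s t \subset E.
Proof. exact: symd_sub. Qed.

Lemma Oworm_sub s : s \in Oworm Vx E -> s \subset E.
Proof. by rewrite in_Oworm => /andP[]. Qed.

Lemma bdry_fz s t k : t \in Omega Vx E 0 ->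
  bdry Vx (fz Vx s t k) = bdry Vx (Rk Vx (symd s t) k).
Proof.
rewrite Omega0E => /andP[_ /eqP ht].
by rewrite /fz bdry_symd ht symdC symd0.
Qed.

Lemma fz_Oworm s t k : s \in Oworm Vx E -> t \in Omega Vx E 0 ->
  fz Vx s t k \in Oworm Vx E.
Proof.
move=> hs ht.
have hsE := Oworm_sub hs; have htE := Omega_sub ht.
have hU := U_sub hsE htE.
rewrite in_Oworm; apply/andP; split.
  apply: symd_sub => //; apply: subset_trans hU; apply: Rk_sub.
rewrite bdry_fz //; apply: (bdry_Rk Eedge) => //.
move: hs ht; rewrite in_Oworm Omega0E => /andP[_ h] /andP[_ /eqP ht].
by rewrite bdry_symd ht symd0.
Qed.

Lemma gsel_E s t k : s \subset E -> t \subset E -> (k < #|symd s t|)%N ->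
  gsel Vx (Rk Vx (symd s t) k) \in E.
Proof.
move=> hs ht hk; apply: (subsetP (U_sub hs ht)).
apply: (subsetP (Rk_sub _ _ k)); exact: gsel_Rk_in.
Qed.

Lemma good s t : s \in Oworm Vx E -> t \in Omega Vx E 0 ->
  good_path Vx E s (Gam Vx s t) t.
Proof.
move=> hs ht; have hsE := Oworm_sub hs; have htE := Omega_sub ht.
rewrite /good_path; apply/and3P; split.
- apply/(pathP s) => i; rewrite size_mkseq => hi.
  rewrite s_Gam nth_mkseq; last by apply: leq_trans hi _.
  rewrite /Gam nth_mkseq //.
  apply/existsP; exists (gsel Vx (Rk Vx (symd s t) i)).
  by rewrite gsel_E // (fzS _ hi) eqxx.
- apply/allP => a /mapP [i _ ->]; exact: fz_Oworm.
- by rewrite -(last_cons s s) s_Gam mkseqS last_rcons fz_end.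
Qed.

Lemma Lmax_le : (Lmax Vx E (Omega Vx E 0) (Gam Vx) <= #|E|)%N.
Proof.
rewrite /Lmax; apply/bigmax_leqP => s hs; apply/bigmax_leqP => t ht.
rewrite size_mkseq; apply: subset_leq_card; apply: U_sub.
  exact: Oworm_sub hs. exact: Omega_sub ht.
Qed.

Lemma wt_IU (A B : {set {set T}}) : wt x A * wt x B = wt x (A :&: B) * wt x (A :|: B).
Proof.
rewrite /wt (big_setID B) /= [X in _ = _ * X](big_setID B) /=.
have -> : (A :|: B) :&: B = B by apply/setP=> y; rewrite !inE; case: (y \in B); rewrite ?orbT ?andbT ?andbF.
have -> : (A :|: B) :\: B = A :\: B by apply/setP=> y; rewrite !inE; case: (y \in B); case: (y \in A).
rewrite /wt; ring.
Qed.

Lemma wt_swap s t (Rm : {set {set T}}) : Rm \subset symd s t ->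
  wt x s * wt x t = wt x (symd t Rm) * wt x (symd s Rm).
Proof.
move=> /subsetP hR; rewrite wt_IU [RHS]wt_IU; congr (wt x _ * wt x _);
  apply/setP=> y; have := hR y; rewrite ?inE ?in_symd ?inE;
  case: (y \in Rm); case: (y \in s); case: (y \in t) => //=; by move=> /(_ isT).
Qed.

Lemma toggle_inj z a b : toggle z a = toggle z b -> a = b.
Proof.
rewrite !toggleE => h; have := congr1 (symd z) h; rewrite !symdKl => /setP h'.
by have := h' a; rewrite !inE eqxx => /esym /eqP.
Qed.

Lemma m_ge2 e : e \in E -> (2 <= m)%N.
Proof.
case/Eedge=> a [b [ha hb hab hE]].
have <- : #|[set a; b]| = 2%N by rewrite cards2 hab.
apply: subset_leq_card; apply/subsetP=> u; rewrite !inE => /orP[] /eqP ->; done.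
Qed.

Lemma wt_in0 z e : e \in z -> x e = 0 -> wt x z = 0.
Proof. by move=> hez hx; rewrite /wt (bigD1 e) //= hx mul0r. Qed.

Lemma card_Bs : (#|[set bdry Vx S | S in Oworm Vx E]| <= 1 + m * m)%N.
Proof.
set A := [set (set0 : {set T})] :|: [set [set p.1; p.2] | p in setX Vx Vx].
have hsub : [set bdry Vx S | S in Oworm Vx E] \subset A.
  apply/subsetP=> W /imsetP [S hS ->]; rewrite !inE.
  move: hS; rewrite in_Oworm => /andP[_ /orP[h|h]].
    by rewrite -cards_eq0 h.
  case/cards2P: h => a [b [hab hW]]; apply/orP; right; apply/imsetP.
  have hsub := bdry_sub Vx S.
  exists (a, b); last by rewrite hW.
  by rewrite !inE /= !(subsetP hsub) // hW !inE eqxx ?orbT.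
apply: leq_trans (subset_leq_card hsub) _.
rewrite /A; apply: leq_trans (leq_addr #|[set (set0 : {set T})] :&: [set [set p.1; p.2] | p in setX Vx Vx]| _) _.
rewrite cardsUI cards1 leq_add2l.
apply: leq_trans (leq_imset_card _ _) _; by rewrite cardsX.
Qed.

Lemma congestion :
  congestion_le Vx E x (Omega Vx E 0) (Gam Vx) ((m ^ 5 * #|E|)%N%:R).
Proof.
move=> z z' hz hz' hP.
set b := ((m ^ 5 * #|E|)%N%:R : R).
set Lm := Lmax Vx E (Omega Vx E 0) (Gam Vx).
have hpz := piw_ge0 z.
have hpset : 0 <= piset Vx E x (Omega Vx E 0) by apply: sumr_ge0 => S _; apply: piw_ge0.
have hb0 : 0 <= b by rewrite ler0n.
rewrite pair_big_dep /=.
set Pp := (fun p : {set {set T}} * {set {set T}} => (p.1 \in Oworm Vx E) &&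
   ((p.2 \in Omega Vx E 0) && uses (Gam Vx) p.1 p.2 z z')).
case: (boolP [exists p, Pp p]) => [/existsP [[s0 t0] hp0] | hnone]; last first.
  rewrite big_pred0; last first.
    move=> p; apply/negbTE; apply: contra hnone => hp; apply/existsP; by exists p.
  rewrite mulr0; apply: mulr_ge0 => //; apply: mulr_ge0; [exact: mulr_ge0 | lra].
move: hp0; rewrite /Pp /= => /and3P [hs0 ht0 hu0].
have hs0E := Oworm_sub hs0; have ht0E := Omega_sub ht0.
case: (uses_fz hu0) => k0 hk0 [ez ez'].
set e := gsel Vx (Rk Vx (symd s0 t0) k0).
have he : e \in E := gsel_E hs0E ht0E hk0.
have hz'e : z' = toggle z e by rewrite ez ez' (fzS _ hk0).
have hm := m_ge2 he.
have hzz' : z != z'.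
  apply/eqP => h; have := congr1 (fun S => e \in S) h; rewrite hz'e toggleE /= in_symd inE eqxx.
  by case: (e \in z).
have hPm : Pm Vx E x z z' = Pedge Vx E x z e.
  rewrite /Pm (negbTE hzz') /Poff; apply: big_pred1 => e0 /=.
  apply/andP/eqP => [[_ /eqP h]|->]; last by rewrite he hz'e eqxx.
  by apply: (@toggle_inj z); rewrite -h hz'e.
have key : forall p, Pp p -> exists2 k, (k < #|symd p.1 p.2|)%N &
    [/\ z = fz Vx p.1 p.2 k, z' = fz Vx p.1 p.2 k.+1 & gsel Vx (Rk Vx (symd p.1 p.2) k) = e].
  move=> [s t]; rewrite /Pp /= => /and3P[hs ht hu].
  case: (uses_fz hu) => k hk [h1 h2]; exists k => //; split => //.
  apply: (@toggle_inj z); by rewrite -hz'e h2 h1 (fzS _ hk).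
set y := z :|: [set e].
have hy : forall p, Pp p -> exists2 Rm : {set {set T}}, Rm \subset symd p.1 p.2 & y = symd p.2 Rm.
  move=> p hp; case: (key p hp) => k hk [h1 h2 h3].
  case: (boolP (e \in z)) => hez.
    exists (Rk Vx (symd p.1 p.2) k); first exact: Rk_sub.
    have -> : y = z by apply/setUidPl; rewrite sub1set.
    by rewrite h1.
  exists (Rk Vx (symd p.1 p.2) k.+1); first exact: Rk_sub.
  have -> : y = z' by rewrite hz'e /toggle (negbTE hez) setUC.
  by rewrite h2.
set eta := fun p : {set {set T}} * {set {set T}} => symd y (symd p.1 p.2).
have heta : forall p, Pp p -> wt x p.1 * wt x p.2 = wt x y * wt x (eta p).
  move=> p hp; case: (hy p hp) => Rm hR hyR; rewrite (wt_swap hR) /eta hyR.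
  congr (_ * wt x _); apply/setP => w; rewrite !in_symd.
  by case: (w \in Rm); case: (w \in p.1); case: (w \in p.2).
have hinj : {in [set p | Pp p] &, injective eta}.
  move=> p1 p2; rewrite !inE => hp1 hp2 heq.
  have hU : symd p1.1 p1.2 = symd p2.1 p2.2.
    by have := congr1 (symd y) heq; rewrite /eta !symdKl.
  case: (key p1 hp1) => k1 hk1 [a1 _ c1]; case: (key p2 hp2) => k2 hk2 [a2 _ c2].
  rewrite hU in hk1 c1.
  have hk : k1 = k2 by apply: (gsel_inj (Vx:=Vx) hk1 hk2); rewrite c1 c2.
  move: a1 a2; rewrite /fz hU hk => a1 a2.
  have ht : p1.2 = p2.2 by rewrite -(symdK p1.2 (Rk Vx (symd p2.1 p2.2) k2)) -a1 a2 symdK.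
  have hs : p1.1 = p2.1 by rewrite -(symdK p1.1 p1.2) hU ht symdK.
  by move: ht hs; clear; case: p1 => ? ?; case: p2 => ? ? /= -> ->.
have hzE := Oworm_sub hz.
have hyE : y \subset E by rewrite subUset hzE sub1set he.
set Bs := [set bdry Vx S | S in Oworm Vx E].
set Bset := [set symd (bdry Vx y) W | W in Bs].
have hbeta : forall p, Pp p -> (eta p \subset E) && (bdry Vx (eta p) \in Bset).
  move=> [s t]; rewrite /Pp /= => /and3P[hs ht _].
  rewrite /eta /= symd_sub ?U_sub ?(Oworm_sub hs) ?(Omega_sub ht) //=.
  move: (ht); rewrite Omega0E => /andP[_ /eqP hbt].
  rewrite !bdry_symd hbt symd0; apply/imsetP; exists (bdry Vx s) => //.
  by apply/imsetP; exists s.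
have hcardB : (#|Bset| <= 1 + m * m)%N.
  by apply: leq_trans (leq_imset_card _ _) _; apply: card_Bs.
have hZ0 : Zk Vx E x 0 = ZW Vx E x set0.
  by rewrite /Zk /ZW; apply: eq_bigl => S; rewrite Omega0E.
have hm0 : (0 < m)%N by apply: leq_trans hm.
have hZd : Zd != 0 by rewrite gt_eqF // Zd_gt0.
have hZdp : 0 < Zd by rewrite Zd_gt0.
set K := m%:R * m%:R * wt x y / (Zd * Zd).
have hK0 : 0 <= K.
  apply: divr_ge0; last by apply: mulr_ge0; lra.
  by apply: mulr_ge0; [apply: mulr_ge0; rewrite ler0n|apply: wt_ge0].
have hsum : \sum_(p | Pp p) piw Vx E x p.1 * piw Vx E x p.2 <=
    K * ((1 + m * m)%N%:R * Zk Vx E x 0).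
  apply: (lemid (\sum_(p | Pp p) K * wt x (eta p))).
    apply: ler_sum => p hp.
    move: (hp); rewrite /Pp => /and3P[hs ht _].
    have hxi := xi_le hs; have hxi0 := xi_ge0 p.1.
    have hw := heta p hp.
    have hw0 : 0 <= wt x p.1 * wt x p.2.
      by apply: mulr_ge0; apply: wt_ge0; [apply: Oworm_sub hs|apply: Omega_sub ht].
    rewrite /piw {2}/xi ht.
    have -> : xi R Vx E p.1 * wt x p.1 / Zd * (m%:R * wt x p.2 / Zd) =
      xi R Vx E p.1 * (m%:R * (wt x p.1 * wt x p.2) / (Zd * Zd)) by field.
    have -> : K * wt x (eta p) = m%:R * (m%:R * (wt x p.1 * wt x p.2) / (Zd * Zd)).
      by rewrite hw /K; field.
    apply: ler_wpM2r => //; apply: divr_ge0; last by apply: mulr_ge0; lra.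
    by apply: mulr_ge0 => //; rewrite ler0n.
  rewrite -mulr_sumr; apply: ler_wpM2l => //.
  rewrite (eq_bigl (mem [set p | Pp p])); last by move=> p; rewrite /= inE.
  rewrite -(big_imset _ hinj) /=.
  apply: (lemid (\sum_(q : {set {set T}} | (q \subset E) && (bdry Vx q \in Bset)) wt x q)).
    rewrite [X in X <= _]big_mkcond [X in _ <= X]big_mkcond /=; apply: ler_sum => q _.
    case: ifP => hq.
      case/imsetP: hq => p; rewrite inE => hp ->; by rewrite hbeta.
    by case: ifP => h //; apply: wt_ge0; case/andP: h.
  rewrite (partition_big (bdry Vx) (mem Bset)) /=; last by move=> q /andP[].
  apply: (lemid (\sum_(W in Bset) ZW Vx E x set0)).
    apply: ler_sum => W hW; apply: le_trans (ZW_le (EVx Eedge) x_ge0 x_le1 W).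
    rewrite /ZW le_eqVlt; apply/orP; left; apply/eqP; apply: eq_bigl => q.
    by case: (eqVneq (bdry Vx q) W) => [->|]; rewrite ?hW ?andbT ?andbF.
  rewrite sumr_const hZ0 -[X in X <= _]mulr_natr mulrC; apply: ler_wpM2r.
    by rewrite -hZ0 Zk_ge0.
  by rewrite ler_nat.
apply: le_trans (ler_wpM2l (ler0n _ Lm) hsum) _.
rewrite hPm.
have hpis : piset Vx E x (Omega Vx E 0) = m%:R * Zk Vx E x 0 / Zd.
  rewrite /piset (eq_bigr (fun S => m%:R * wt x S / Zd)); last by move=> S hS; rewrite /piw /xi hS.
  by rewrite -mulr_suml -mulr_sumr.
rewrite hpis /piw.
have hwy : wt x y = wt x z * xpow x z e.
  rewrite /y /xpow; case: ifP => hez.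
    have -> : z :|: [set e] = z by apply/setUidPl; rewrite sub1set.
    by rewrite mulr1.
  by rewrite setUC /wt big_setU1 /= ?hez // mulrC.
set q := xpow x z e; set Pe := Pedge Vx E x z e; set Xi := xi R Vx E z.
set Kc := m%:R * wt x z * Zk Vx E x 0 / (Zd * Zd).
have -> : Lm%:R * (K * ((1 + m * m)%N%:R * Zk Vx E x 0)) =
    (Lm%:R * m%:R * (1 + m * m)%N%:R * q) * Kc.
  by rewrite /K /Kc hwy -/q; field.
have -> : b * (m%:R * Zk Vx E x 0 / Zd * (Xi * wt x z / Zd) * Pe) = (b * (Xi * Pe)) * Kc.
  by rewrite /Kc; field.
have hw0 : 0 <= wt x z := wt_ge0 hzE.
have hKc : 0 <= Kc.
  apply: divr_ge0; last by apply: mulr_ge0; lra.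
  apply: mulr_ge0; [apply: mulr_ge0 => //; rewrite ler0n| apply: Zk_ge0].
case: (eqVneq (wt x z) 0) => hwz.
  by rewrite /Kc hwz !(mulr0, mul0r).
apply: ler_wpM2r => //.
have hpos : e \in z -> 0 < x e.
  move=> hez; rewrite lt_def x_ge0 // andbT; apply/eqP => hx0.
  by move/eqP: hwz; apply; apply: wt_in0 hez hx0.
have hmeet : z \in Omega Vx E 2 -> ~~ [disjoint e & bdry Vx z].
  move=> h2; move: (h2); rewrite in_Omega => /andP[_ /eqP hc].
  move: hc; rewrite ez bdry_fz // => hc; apply: gsel_meet.
    exact: subset_trans (Rk_sub _ _ _) (U_sub hs0E ht0E).
  by rewrite -card_gt0 hc.
have hz'' : toggle z e \in Oworm Vx E by rewrite -hz'e.
have hlb := Pedge_lb hz hz'' he hmeet hpos hm.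
apply: le_trans (ler_wpM2l hb0 hlb).
have hq0 : 0 <= q := xpow_ge0 z he.
have hD0 : (0 : R) < 2 * (m.-1)%:R.
  apply: mulr_gt0; first lra. by rewrite ltr0n; case: (m) hm => [|[|k]].
have -> : b * (q / (2 * (m.-1)%:R)) = (b / (2 * (m.-1)%:R)) * q.
  by rewrite mulrCA mulrC.
apply: ler_wpM2r => //.
rewrite ler_pdivlMr // /b -!natrM ler_nat.
apply: nat_bound => //; exact: Lmax_le.
Qed.

End Main.

Lemma ord4_cases (i : 'I_4) : [\/ i = slot1, i = slot2, i = slot3 | i = slot4].
Proof.
case: i => [[|[|[|[|n]]]] Hi]; [constructor 1|constructor 2|constructor 3|constructor 4|by []];
  by apply: val_inj.
Qed.

Section Inst.
Variables (R : realFieldType) (V : finType) (opp : hedge V -> hedge V)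
  (beta : R) (ref ref' : {set hedge V} -> hedge V) (X : {set hedge V} -> bool).
Hypothesis hbeta : 1 < beta.
Hypothesis hX : forall u v, u \in Circ opp -> v \in Circ opp -> [set u; v] \in EC opp ->
     X u (+) X v = (Acnt beta opp ref [set u; v] < Dcnt beta opp ref [set u; v])%N.
Hypothesis href' : forall C, C \in Circ opp ->
     if X C then ref' C \in [:: opp (ref C); partner (ref C)] else ref' C == ref C.

Lemma sigma_partner (sigma : {ffun hedge V -> bool}) h :
  valid_sigma beta opp sigma -> sigma (partner h) = ~~ sigma h.
Proof.
case/andP=> _ /forallP hv; case: h => v i; rewrite /partner /=.
have := hv v; rewrite /vweight /fstar.
have r1 : rev_ord slot1 = slot4 by apply: val_inj.
have r2 : rev_ord slot2 = slot3 by apply: val_inj.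
have r3 : rev_ord slot3 = slot2 by apply: val_inj.
have r4 : rev_ord slot4 = slot1 by apply: val_inj.
case: (ord4_cases i) => ->; rewrite ?r1 ?r2 ?r3 ?r4;
  by case: (sigma (v, slot1)); case: (sigma (v, slot2)); case: (sigma (v, slot3));
     case: (sigma (v, slot4)); rewrite /= ?eqxx.
Qed.

Lemma sigma_opp (sigma : {ffun hedge V -> bool}) h :
  valid_sigma beta opp sigma -> sigma (opp h) = ~~ sigma h.
Proof. by case/andP=> /forallP hv _; apply/eqP. Qed.

Lemma sigma_ref' (sigma : {ffun hedge V -> bool}) C : C \in Circ opp ->
  valid_sigma beta opp sigma -> sigma (ref' C) = sigma (ref C) (+) X C.
Proof.
move=> hC hv; have := href' hC; case: (X C).
  rewrite !inE => /orP[] /eqP ->; by rewrite ?sigma_opp ?sigma_partner // addbT.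
by move/eqP ->; rewrite addbF.
Qed.

Lemma agree_ref' v C C' : C \in Circ opp -> C' \in Circ opp ->
  agree beta opp ref' v C C' =
  if X C (+) X C' then disagree beta opp ref v C C' else agree beta opp ref v C C'.
Proof.
move=> hC hC'; rewrite /agree /disagree.
case hf: (X C (+) X C'); congr (_ && _); apply: eq_forallb => sigma /=;
  case hv: (valid_sigma beta opp sigma) => //=;
  rewrite !sigma_ref' //; move: hf;
  by case: (X C); case: (X C'); case: (sigma (ref C)); case: (sigma (ref C')).
Qed.

Lemma disagree_ref' v C C' : C \in Circ opp -> C' \in Circ opp ->
  disagree beta opp ref' v C C' =
  if X C (+) X C' then agree beta opp ref v C C' else disagree beta opp ref v C C'.
Proof.
move=> hC hC'; rewrite /agree /disagree.
case hf: (X C (+) X C'); congr (_ && _); apply: eq_forallb => sigma /=;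
  case hv: (valid_sigma beta opp sigma) => //=;
  rewrite !sigma_ref' //; move: hf;
  by case: (X C); case: (X C'); case: (sigma (ref C)); case: (sigma (ref C')).
Qed.

Lemma EC_edge e : e \in EC opp -> exists C C',
  [/\ C \in Circ opp, C' \in Circ opp, C != C' & e = [set C; C']].
Proof.
rewrite inE => /existsP [C /andP [hC /existsP [C' /andP [hC' /andP [/existsP [w hw] /eqP ->]]]]].
exists C, C'; split => //; by case/and5P: hw.
Qed.

Lemma cnt_eq u v : u \in Circ opp -> v \in Circ opp ->
  (Acnt beta opp ref' [set u; v] =
     if X u (+) X v then Dcnt beta opp ref [set u; v] else Acnt beta opp ref [set u; v]) /\
  (Dcnt beta opp ref' [set u; v] =
     if X u (+) X v then Acnt beta opp ref [set u; v] else Dcnt beta opp ref [set u; v]).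
Proof.
move=> hu hv.
have key : forall C C', C \in [set u; v] -> C' \in [set u; v] -> C != C' ->
    [/\ C \in Circ opp, C' \in Circ opp & X C (+) X C' = X u (+) X v].
  move=> C C'; rewrite !inE => /orP[] /eqP -> /orP[] /eqP -> //; rewrite ?eqxx // => _;
    split => //; exact: addbC.
rewrite /Acnt /Dcnt; split; case hf: (X u (+) X v) => /=; apply: eq_card => w; rewrite !inE;
  apply: eq_existsb => C; case hC: (C \in [set u; v]) => //=;
  apply: eq_existsb => C'; case hC': (C' \in [set u; v]) => //=;
  (case: (eqVneq C C') => [->|hne]; first by rewrite /agree /disagree /crossing eqxx);
  case: (key C C' hC hC' hne) => h1 h2 h3;
  by rewrite ?agree_ref' ?disagree_ref' // h3 hf.
Qed.

Lemma AD_le e : e \in EC opp -> (Dcnt beta opp ref' e <= Acnt beta opp ref' e)%N.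
Proof.
move=> he; case: (EC_edge he) => C [C' [hC hC' hne hE]].
have := hX hC hC'; rewrite -hE => /(_ he) hf.
case: (cnt_eq hC hC'); rewrite -hE => -> ->; rewrite hf.
case: ltnP => //; exact: ltnW.
Qed.

Lemma xw_be e : e \in EC opp ->
  exists2 be : R, 1 <= be & xweight beta opp ref' e = (be - 1) / (be + 1).
Proof.
move=> he; rewrite /xweight /=.
rewrite subzn ?AD_le // -exprnP.
eexists; last reflexivity.
apply: exprn_ege1; exact: ltW.
Qed.

Lemma xw_ge0 e : e \in EC opp -> 0 <= xweight beta opp ref' e.
Proof.
case/xw_be=> be h1 ->.
have h0 : 0 <= be by apply: le_trans h1; apply: ler01.
apply: divr_ge0; first by rewrite subr_ge0.
by apply: addr_ge0.
Qed.

Lemma xw_le1 e : e \in EC opp -> xweight beta opp ref' e <= 1.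
Proof.
case/xw_be=> be h1 ->.
have h0 : 0 < be + 1 by apply: ltr_wpDl; [apply: le_trans h1; apply: ler01|apply: ltr01].
rewrite ler_pdivrMr // mul1r; apply: lerD => //; apply: le_trans (lerN10 _) ler01.
Qed.

Lemma EC_Eedge e : e \in EC opp ->
  exists a b, [/\ a \in Circ opp, b \in Circ opp, a != b & e = [set a; b]].
Proof. by case/EC_edge=> C [C' [h1 h2 h3 h4]]; exists C, C'. Qed.

End Inst.

Unset Implicit Arguments.
Set Strict Implicit.

Theorem lemma6 (R : realFieldType) (V : finType) (opp : hedge V -> hedge V)
  (beta : R) (ref ref' : {set hedge V} -> hedge V) (X : {set hedge V} -> bool) :
  1 < beta ->
  involutive opp -> no_loops opp -> simple_graph opp -> connected_graph opp ->
  (* reference half-edges h_i in C_i *)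
  (forall C, C \in Circ opp -> ref C \in C) ->
  (* X solves X_u (+) X_v = I(A(u,v) < D(u,v)) over GF(2) on E_C *)
  (forall u v, u \in Circ opp -> v \in Circ opp -> [set u; v] \in EC opp ->
     X u (+) X v = (Acnt beta opp ref [set u; v] < Dcnt beta opp ref [set u; v])%N) ->
  (* new reference half-edges: an adjacent half-edge of C_i when X_i = 1 *)
  (forall C, C \in Circ opp ->
     if X C then ref' C \in [:: opp (ref C); partner (ref C)] else ref' C == ref C) ->
  exists Gam : {set {set {set hedge V}}} -> {set {set {set hedge V}}} ->
               seq {set {set {set hedge V}}},
    paths_ok (Circ opp) (EC opp) (Omega (Circ opp) (EC opp) 0) Gam /\
    congestion_le (Circ opp) (EC opp) (xweight beta opp ref')
      (Omega (Circ opp) (EC opp) 0) Gam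
      ((#|Circ opp| ^ 5 * #|EC opp|)%N%:R).
Proof.
move=> hb _ _ _ _ _ hX href'.
have hE : forall e, e \in EC opp ->
    exists a b, [/\ a \in Circ opp, b \in Circ opp, a != b & e = [set a; b]].
  by move=> e; apply: EC_Eedge.
have h0 : forall e, e \in EC opp -> 0 <= xweight beta opp ref' e.
  by move=> e he; exact: (xw_ge0 hb hX href' he).
have h1 : forall e, e \in EC opp -> xweight beta opp ref' e <= 1.
  by move=> e he; exact: (xw_le1 hb hX href' he).
exists (Gam (Circ opp)); split.
  move=> s t hs ht; exact: (good hE hs ht).
exact: (congestion hE h0 h1).
Qed.
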